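(* Let $\mathscr{A}$ be a $C^*$-algebra with identity (not necessarily abelian) and let $\mathscr{X}$ be a right $\mathscr{A}$-module. Let $E, F\colon\mathscr{X}\to\mathscr{A}$ be $\mathscr{A}$-linear functions, and assume that $E$ is strong, i.e., there exists $w\in\mathscr{X}$ such that $E(w)$ is invertible in $\mathscr{A}$ ($E$ is not assumed bounded). Then the following are equivalent: (i) for all $x\in\mathscr{X}$, $E(x)=0$ implies $F(x)=0$; (ii) there exists $c\in\mathscr{A}$ such that $F(x)=cE(x)$ for all $x\in\mathscr{X}$.
   Context: A right $\mathscr{A}$-module $\mathscr{X}$ is a complex vector space with a right $\mathscr{A}$-action satisfying $(\alpha x)a=x(\alpha a)=\alpha(xa)$. A function $E\colon\mathscr{X}\to\mathscr{A}$ is $\mathscr{A}$-linear if it is additive and $E(\alpha x a)=\alpha E(x)a$ for all $x\in\mathscr{X}$, $\alpha\in\mathbb{C}$, $a\in\mathscr{A}$. *)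

(* Defs.v *)
From HB Require Import structures.
From mathcomp Require Import all_boot all_order all_algebra.
From mathcomp Require Import complex.
From mathcomp Require Import reals.
Set Implicit Arguments. Unset Strict Implicit. Unset Printing Implicit Defensive.
Import Order.TTheory GRing.Theory Num.Theory.
Local Open Scope ring_scope.

Definition is_Cstar_algebra (R : realType) (A : algType R[i])
    (star : A -> A) (nrm : A -> R) : Prop :=
  (forall x, 0 <= nrm x) /\
  (forall x, nrm x = 0 -> x = 0) /\
  (forall x y, nrm (x + y) <= nrm x + nrm y) /\
  (forall (a : R[i]) x, real_complex R (nrm (a *: x)) = `|a| * real_complex R (nrm x)) /\
  (forall x y, nrm (x * y) <= nrm x * nrm y) /\
  (forall x y, star (x + y) = star x + star y) /\
  (forall (a : R[i]) x, star (a *: x) = (Num.conj a) *: star x) /\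
  (forall x y, star (x * y) = star y * star x) /\
  (forall x, star (star x) = x) /\
  (forall x, nrm (star x * x) = nrm x ^+ 2) /\
  (forall u : nat -> A,
      (forall e : R, 0 < e -> exists N : nat, forall m n : nat,
          (N <= m)%N -> (N <= n)%N -> nrm (u m - u n) < e) ->
      exists l : A, forall e : R, 0 < e -> exists N : nat, forall n : nat,
          (N <= n)%N -> nrm (u n - l) < e).

Definition is_right_module (R : realType) (A : algType R[i]) (X : lmodType R[i])
    (act : X -> A -> X) : Prop :=
  (forall x y a, act (x + y) a = act x a + act y a) /\
  (forall x a b, act x (a + b) = act x a + act x b) /\
  (forall x a b, act x (a * b) = act (act x a) b) /\
  (forall (alpha : R[i]) x a, act (alpha *: x) a = act x (alpha *: a)) /\
  (forall (alpha : R[i]) x a, act x (alpha *: a) = alpha *: act x a).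

Definition A_linear (R : realType) (A : algType R[i]) (X : lmodType R[i])
    (act : X -> A -> X) (E : X -> A) : Prop :=
  (forall x y, E (x + y) = E x + E y) /\
  (forall (alpha : R[i]) x a, E (act (alpha *: x) a) = (alpha *: E x) * a).

Definition strong (R : realType) (A : algType R[i]) (X : lmodType R[i])
    (E : X -> A) : Prop :=
  exists w : X, exists b : A, E w * b = 1 /\ b * E w = 1.

(* Main.v *)
Require Import Defs.
From HB Require Import structures.
From mathcomp Require Import all_boot all_order all_algebra.
From mathcomp Require Import complex.
From mathcomp Require Import reals.
Import GRing.Theory.
Local Open Scope ring_scope.

Theorem theorem4p4 (R : realType) (A : algType R[i]) (star : A -> A) (nrm : A -> R)
    (X : lmodType R[i]) (act : X -> A -> X) (E F : X -> A) :
  is_Cstar_algebra star nrm ->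
  is_right_module act ->
  A_linear act E -> A_linear act F ->
  strong E ->
  ((forall x : X, E x = 0 -> F x = 0) <->
   (exists c : A, forall x : X, F x = c * E x)).
Proof.
move=> _ _ [Ead Esc] [Fad Fsc] [w [b [Hwb _]]].
have neg : forall G : X -> A, (forall x y, G (x + y) = G x + G y) ->
    forall x y, G (x - y) = G x - G y.
  move=> G Gad x y.
  have G0 : G 0 = 0.
    have h := Gad 0 0; rewrite addr0 in h.
    by apply: (addrI (G 0)); rewrite -h addr0.
  have GN : G (- y) = - G y.
    have h := Gad y (- y); rewrite subrr G0 in h.
    by apply/eqP; rewrite -addr_eq0 addrC -h.
  by rewrite Gad GN.
have Eact : forall a, E (act w a) = E w * a.
  by move=> a; rewrite -[w]scale1r Esc !scale1r.
have Fact : forall a, F (act w a) = F w * a.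
  by move=> a; rewrite -[w]scale1r Fsc !scale1r.
split.
- move=> H; exists (F w * b) => x.
  have : E (x - act w (b * E x)) = 0.
    by rewrite (neg E Ead) Eact mulrA Hwb mul1r subrr.
  move/H; rewrite (neg F Fad) Fact mulrA => /eqP; rewrite subr_eq0 => /eqP.
  done.
- by move=> [c Hc] x Ex; rewrite Hc Ex mulr0.
Qed.
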